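(* Let $A\subseteq B$ be commutative semirings, $S=A[x_1,\dots,x_n]$, $\rho$ a congruence on $B$, and $T\subseteq S\times S$ non-empty. Then there is a bijection between $Z_\rho(T)(B)/\rho$ and $\mathrm{Hom}_{A\text{-alg}}(S/T^{c},B/\rho)$; in particular $\#\,Z_\rho(T)(B)/\rho=\#\,\mathrm{Hom}_{A\text{-alg}}(S/T^{c},B/\rho)$. In particular, if $\rho=\mathrm{id}_B$, then $\#\,Z_{\mathrm{id}_B}(T)(B)=\#\,\mathrm{Hom}_{A\text{-alg}}(S/T^{c},B)$.
   Context: Semirings are commutative with $0$ and $1\neq0$, $0a=0$; congruences are equivalence relations compatible with $+$ and $\cdot$; $\mathrm{id}_B=\{(b,b)\}$. $T^{c}$ is the congruence on $S$ generated by $T$. $Z_\rho(T)(B)=\{P\in B^n:(f(P),g(P))\in\rho\ \forall(f,g)\in T\}$. For $Y\subseteq B^n$, $Y/\rho=\{(\bar c_1,\dots,\bar c_n):(c_1,\dots,c_n)\in Y\}\subseteq(B/\rho)^n$ where $\bar c$ is the class of $c$ modulo $\rho$. An $A$-semialgebra is a commutative semiring $C$ which is an $A$-semimodule with $a(bc)=(ab)c=b(ac)$; $S/T^{c}$ and $B/\rho$ are $A$-semialgebras via $A\hookrightarrow S\to S/T^{c}$ and $A\hookrightarrow B\to B/\rho$. $\mathrm{Hom}_{A\text{-alg}}(C,D)$ is the set of maps that are semiring homomorphisms (preserving $0,1,+,\cdot$) and $A$-semimodule homomorphisms. *)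

(* Defs.v *)
From HB Require Import structures.
From mathcomp Require Import all_boot all_algebra.
From Stdlib Require Import ClassicalEpsilon.
Set Implicit Arguments. Unset Strict Implicit. Unset Printing Implicit Defensive.
Import GRing.Theory.
Local Open Scope ring_scope.

(* S = A[x_0, ..., x_(n-1)], built as iterated univariate polynomials:
   spoly A 0 = A, spoly A (k+1) = (spoly A k)[x_k]. *)
Fixpoint spoly (R : comNzSemiRingType) (n : nat) : comNzSemiRingType :=
  match n with 0 => R | k.+1 => {poly (spoly R k)} : comNzSemiRingType end.

Fixpoint polyn_cst (R : comNzSemiRingType) (n : nat) : R -> spoly R n :=
  match n return R -> spoly R n with
  | 0 => fun a => a
  | k.+1 => fun a => (@polyn_cst R k a)%:P
  end.

Fixpoint polyn_evaln (R B : comNzSemiRingType) (f : R -> B) (Q : nat -> B)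
    (n : nat) : spoly R n -> B :=
  match n return spoly R n -> B with
  | 0 => f
  | k.+1 => fun p : {poly (spoly R k)} =>
      \sum_(i < size p) @polyn_evaln R B f Q k p`_i * Q k ^+ i
  end.

Definition polyn_eval (R B : comNzSemiRingType) (f : R -> B) (n : nat)
    (P : 'I_n -> B) (p : spoly R n) : B :=
  polyn_evaln f (fun j => if insub j is Some i then P i else 0) p.

Definition congruence (X : comNzSemiRingType) (r : X -> X -> Prop) : Prop :=
  [/\ (forall x, r x x),
      (forall x y, r x y -> r y x),
      (forall x y z, r x y -> r y z -> r x z),
      (forall a b c d, r a b -> r c d -> r (a + c) (b + d)) &
      (forall a b c d, r a b -> r c d -> r (a * c) (b * d))].

Definition gen_cong (X : comNzSemiRingType) (T : X * X -> Prop) : X -> X -> Prop :=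
  fun x y => forall r, congruence r -> (forall t, T t -> r t.1 t.2) -> r x y.

Definition quot (X : Type) (r : X -> X -> Prop) : Type :=
  {C : X -> Prop | exists x, C = r x}.

Definition qclass (X : Type) (r : X -> X -> Prop) (x : X) : quot r :=
  exist _ (r x) (ex_intro _ x erefl).

Definition qrepr (X : Type) (r : X -> X -> Prop) (q : quot r) : X :=
  proj1_sig (constructive_indefinite_description _ (proj2_sig q)).

(* induced operations on X / r (well defined when r is a congruence) *)
Definition qzero (X : comNzSemiRingType) (r : X -> X -> Prop) : quot r := qclass r 0.
Definition qone (X : comNzSemiRingType) (r : X -> X -> Prop) : quot r := qclass r 1.
Definition qadd (X : comNzSemiRingType) (r : X -> X -> Prop) (u v : quot r) : quot r :=
  qclass r (qrepr u + qrepr v).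
Definition qmul (X : comNzSemiRingType) (r : X -> X -> Prop) (u v : quot r) : quot r :=
  qclass r (qrepr u * qrepr v).
Definition qscale (A X : comNzSemiRingType) (h : A -> X) (r : X -> X -> Prop)
    (a : A) (u : quot r) : quot r :=
  qclass r (h a * qrepr u).

Definition is_Aalg_hom (A : Type) (C D : Type)
    (zC oC : C) (addC mulC : C -> C -> C) (scC : A -> C -> C)
    (zD oD : D) (addD mulD : D -> D -> D) (scD : A -> D -> D)
    (phi : C -> D) : Prop :=
  [/\ phi zC = zD, phi oC = oD,
      (forall u v, phi (addC u v) = addD (phi u) (phi v)),
      (forall u v, phi (mulC u v) = mulD (phi u) (phi v)) &
      (forall a u, phi (scC a u) = scD a (phi u))].

Section Objects.
Variables (A B : comNzSemiRingType) (iota : A -> B) (n : nat).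
Variables (rho : B -> B -> Prop) (T : spoly A n * spoly A n -> Prop).

Definition Zrho (P : 'I_n -> B) : Prop :=
  forall fg, T fg -> rho (polyn_eval iota P fg.1) (polyn_eval iota P fg.2).

(* Z_rho(T)(B) / rho, a subset of (B/rho)^n *)
Definition Zrho_quot : Type :=
  {v : 'I_n -> quot rho | exists P, Zrho P /\ v = (fun i => qclass rho (P i))}.

Definition SmodT := quot (gen_cong T).

Definition Hom_quot : Type :=
  {phi : SmodT -> quot rho |
     is_Aalg_hom
       (qzero (gen_cong T)) (qone (gen_cong T)) (@qadd _ (gen_cong T))
       (@qmul _ (gen_cong T)) (@qscale A _ (@polyn_cst A n) (gen_cong T))
       (qzero rho) (qone rho) (@qadd _ rho) (@qmul _ rho) (@qscale A _ iota rho)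
       phi}.

Definition Hom_B : Type :=
  {phi : SmodT -> B |
     is_Aalg_hom
       (qzero (gen_cong T)) (qone (gen_cong T)) (@qadd _ (gen_cong T))
       (@qmul _ (gen_cong T)) (@qscale A _ (@polyn_cst A n) (gen_cong T))
       0 1 +%R *%R (fun a b => iota a * b)
       phi}.
End Objects.

(* Main.v *)
Require Import Defs.
From HB Require Import structures.
From mathcomp Require Import all_boot all_algebra.
From Stdlib Require Import ClassicalEpsilon ProofIrrelevance FunctionalExtensionality PropExtensionality.
Set Implicit Arguments. Unset Strict Implicit. Unset Printing Implicit Defensive.
Import GRing.Theory.
Local Open Scope ring_scope.

Fixpoint pvar (A : comNzSemiRingType) (k i : nat) : spoly A k :=
  match k return spoly A k with
  | 0 => 0
  | k'.+1 => if i == k' then ('X : {poly spoly A k'}) else (@pvar A k' i)%:P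
  end.

Section Eval.
Variables (A B : comNzSemiRingType) (iota : {rmorphism A -> B}) (Q : nat -> B).
Local Notation EV k := (@polyn_evaln A B iota Q k).

Lemma evm k : exists g : {rmorphism spoly A k -> B}, g =1 EV k.
Proof.
elim: k => [|k [g hg]]; first by exists iota.
have cfu : commr_rmorph g (Q k) by move=> x; exact: mulrC.
exists (horner_morph cfu) => p /=.
rewrite /horner_morph (@horner_coef_wide _ (size p)) ?size_poly //.
by apply: eq_bigr => i _; rewrite coef_map /= hg.
Qed.

Lemma ev0 k : EV k 0 = 0.
Proof. by have [g hg] := evm k; rewrite -hg rmorph0. Qed.
Lemma ev1 k : EV k 1 = 1.
Proof. by have [g hg] := evm k; rewrite -hg rmorph1. Qed.
Lemma evD k p q : EV k (p + q) =
   EV k p + EV k q.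
Proof. by have [g hg] := evm k; rewrite -!hg rmorphD. Qed.
Lemma evM k p q : EV k (p * q) =
   EV k p * EV k q.
Proof. by have [g hg] := evm k; rewrite -!hg rmorphM. Qed.

Lemma evS_wide k (p : {poly spoly A k}) m : (size p <= m)%N ->
  EV k.+1 p = \sum_(i < m) EV k p`_i * Q k ^+ i.
Proof.
move=> le_p_n /=.
rewrite (big_ord_widen m (fun i => EV k p`_i * Q k ^+ i)) // big_mkcond.
by apply: eq_bigr => i _; case: ltnP => // le_p_i; rewrite nth_default ?ev0 ?mul0r.
Qed.

Lemma ev_cst k a : EV k (polyn_cst k a) = iota a.
Proof.
elim: k => [|k IH] //.
rewrite [polyn_cst _ _]/= (@evS_wide k _ 1) ?size_polyC ?leq_b1 // big_ord1 coefC /= IH expr0 mulr1 //.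
Qed.

Lemma ev_var k i : (i < k)%N -> EV k (pvar A k i) = Q i.
Proof.
elim: k => [|k IH] // hi.
rewrite [pvar _ _ _]/=; case: eqP => [->|ne].
  rewrite (@evS_wide k _ 2) ?size_polyX // big_ord_recr big_ord1 /= !coefX /=.
  by rewrite ev0 ev1 mul0r add0r expr1 mul1r.
have hik : (i < k)%N by rewrite ltn_neqAle (introN eqP ne) -ltnS.
rewrite (@evS_wide k _ 1) ?size_polyC ?leq_b1 // big_ord1 coefC /= IH // expr0 mulr1 //.
Qed.
End Eval.

Section Uniq.
Variables (A B : comNzSemiRingType) (rho : B -> B -> Prop) (hr : congruence rho).

Lemma rrefl x : rho x x. Proof. case: hr => r0 s0 t0 a0 m0; exact: r0. Qed.
Lemma rsym x y : rho x y -> rho y x. Proof. case: hr => r0 s0 t0 a0 m0; exact: s0. Qed.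
Lemma rtrans x y z : rho x y -> rho y z -> rho x z. Proof. case: hr => r0 s0 t0 a0 m0; exact: t0. Qed.
Lemma radd a b c d : rho a b -> rho c d -> rho (a + c) (b + d). Proof. case: hr => r0 s0 t0 a0 m0; exact: a0. Qed.
Lemma rmul a b c d : rho a b -> rho c d -> rho (a * c) (b * d). Proof. case: hr => r0 s0 t0 a0 m0; exact: m0. Qed.

Lemma rsum m (F G : 'I_m -> B) : (forall i, rho (F i) (G i)) ->
  rho (\sum_(i < m) F i) (\sum_(i < m) G i).
Proof.
move=> h; apply: (big_ind2 rho) => [|x1 x2 y1 y2|i _]; [exact: rrefl | exact: radd | exact: h].
Qed.

Definition rmor (X : comNzSemiRingType) (psi : X -> B) :=
  [/\ rho (psi 0) 0, rho (psi 1) 1,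
      forall p q, rho (psi (p + q)) (psi p + psi q) &
      forall p q, rho (psi (p * q)) (psi p * psi q)].

Lemma rmor_sum (X : comNzSemiRingType) (psi : X -> B) m (F : 'I_m -> X) :
  rmor psi -> rho (psi (\sum_(i < m) F i)) (\sum_(i < m) psi (F i)).
Proof.
case=> h0 h1 hD hM; elim: m F => [|m IH] F.
  by rewrite !big_ord0.
rewrite !big_ord_recr /=; apply: rtrans (hD _ _) _; apply: radd (IH _) (rrefl _).
Qed.

Lemma rmor_exp (X : comNzSemiRingType) (psi : X -> B) x i :
  rmor psi -> rho (psi (x ^+ i)) (psi x ^+ i).
Proof.
case=> h0 h1 hD hM; elim: i => [|i IH]; first by rewrite !expr0.
rewrite !exprS; apply: rtrans (hM _ _) _; apply: rmul (rrefl _) IH.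
Qed.

Lemma rmor_uniq k : forall psi1 psi2 : spoly A k -> B, rmor psi1 -> rmor psi2 ->
  (forall a, rho (psi1 (polyn_cst k a)) (psi2 (polyn_cst k a))) ->
  (forall i, (i < k)%N -> rho (psi1 (pvar A k i)) (psi2 (pvar A k i))) ->
  forall p, rho (psi1 p) (psi2 p).
Proof.
elim: k => [|k IH] psi1 psi2 m1 m2 hc hv; first exact: hc.
have mC (psi : spoly A k.+1 -> B) : rmor psi -> rmor (fun c : spoly A k => psi c%:P).
  by case=> h0 h1 hD hM; split=> [|| p q | p q]; rewrite ?polyC0 ?polyC1 ?polyCD ?polyCM.
have IHc := IH _ _ (mC _ m1) (mC _ m2) hc.
have hX : rho (psi1 ('X : {poly spoly A k})) (psi2 ('X : {poly spoly A k})).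
  by have := hv k (ltnSn k); rewrite /= eqxx.
move=> p; rewrite -[p]coefK poly_def.
have E (psi : spoly A k.+1 -> B) : rmor psi -> rho (psi (\sum_(i < size p) p`_i *: 'X^i))
   (\sum_(i < size p) psi (p`_i)%:P * psi ('X : {poly spoly A k}) ^+ i).
  move=> mp; apply: rtrans (rmor_sum _ mp) _; apply: rsum => i.
  rewrite -mul_polyC; case: (mp) => _ _ _ hM; apply: rtrans (hM _ _) _.
  by apply: rmul; [exact: rrefl | exact: rmor_exp].
apply: rtrans (E _ m1) _; apply: rtrans _ (rsym (E _ m2)); apply: rsum => i.
apply: rmul; first apply: IHc.
  by move=> j hj; have := hv j (ltnW hj); rewrite /= (ltn_eqF hj).
elim: (nat_of_ord i) => [|e IHe]; first by rewrite !expr0; exact: rrefl.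
by rewrite !exprS; apply: rmul.
Qed.
End Uniq.

Section Quot.
Variables (X : comNzSemiRingType) (r : X -> X -> Prop) (hr : congruence r).

Lemma sig_eqP (Y : Type) (P : Y -> Prop) (u v : {y | P y}) : sval u = sval v -> u = v.
Proof. apply: eq_sig_hprop => y p q; exact: proof_irrelevance. Qed.

Lemma qclass_eq x y : r x y -> qclass r x = qclass r y.
Proof.
move=> h; apply: sig_eqP => /=; apply: functional_extensionality => z.
apply: propositional_extensionality; split=> hz.
  exact: (rtrans hr (rsym hr h) hz).
exact: (rtrans hr h hz).
Qed.

Lemma qclass_inj x y : qclass r x = qclass r y -> r x y.
Proof. move/(congr1 (@proj1_sig _ _)) => /= ->; exact: rrefl. Qed.

Lemma qreprK q : qclass r (qrepr q) = q.
Proof.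
case: q => C hC; rewrite /qrepr /=.
case: (constructive_indefinite_description _ hC) => y /= ey.
by apply: sig_eqP => /=; rewrite ey.
Qed.

Lemma qrepr_rel x : r (qrepr (qclass r x)) x.
Proof. by apply: qclass_inj; rewrite qreprK. Qed.
End Quot.

Lemma gen_cong_cong (X : comNzSemiRingType) (T : X * X -> Prop) : congruence (gen_cong T).
Proof.
split.
- by move=> x r hr _; exact: rrefl.
- by move=> x y h r hr hT; exact: (rsym hr (h r hr hT)).
- by move=> x y z h1 h2 r hr hT; apply: (rtrans hr (h1 r hr hT) (h2 r hr hT)).
- by move=> a b c d h1 h2 r hr hT; apply: (radd hr (h1 r hr hT) (h2 r hr hT)).
- by move=> a b c d h1 h2 r hr hT; apply: (rmul hr (h1 r hr hT) (h2 r hr hT)).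
Qed.

Lemma gen_cong_T (X : comNzSemiRingType) (T : X * X -> Prop) t : T t -> gen_cong T t.1 t.2.
Proof. by move=> ht r _ hT; exact: hT. Qed.

Lemma eq_cong (X : comNzSemiRingType) : congruence (@eq X).
Proof. by split=> // [x y z -> | a b c d -> -> | a b c d -> ->]. Qed.

Section Main.
Variables (A B : comNzSemiRingType) (iota : {rmorphism A -> B}) (n : nat).
Variables (T : spoly A n * spoly A n -> Prop).
Local Notation cT := (gen_cong T).
Local Notation hT := (gen_cong_cong T).
Local Notation Ev P := (@polyn_eval A B iota n P).

Lemma Ev_rmor (rho : B -> B -> Prop) (hr : congruence rho) P : rmor rho (Ev P).
Proof.
rewrite /polyn_eval; split=> [||p q|p q].
- rewrite ev0; exact: (rrefl hr).
- rewrite ev1; exact: (rrefl hr).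
- rewrite evD; exact: (rrefl hr).
- rewrite evM; exact: (rrefl hr).
Qed.

Lemma Ev_cst P a : Ev P (polyn_cst n a) = iota a.
Proof. exact: ev_cst. Qed.

Lemma Ev_var P (i : 'I_n) : Ev P (pvar A n i) = P i.
Proof. by rewrite /polyn_eval ev_var // valK. Qed.

Lemma Ev0 P : Ev P 0 = 0. Proof. exact: ev0. Qed.
Lemma Ev1 P : Ev P 1 = 1. Proof. exact: ev1. Qed.
Lemma EvD P p q : Ev P (p + q) = Ev P p + Ev P q. Proof. exact: evD. Qed.
Lemma EvM P p q : Ev P (p * q) = Ev P p * Ev P q. Proof. exact: evM. Qed.

Lemma Ev_gen (rho : B -> B -> Prop) (hr : congruence rho) P :
  Zrho iota rho T P -> forall p q, cT p q -> rho (Ev P p) (Ev P q).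
Proof.
move=> hZ p q h; apply: (h (fun x y => rho (Ev P x) (Ev P y))) => //.
split=> [x|x y|x y z|a b c d|a b c d].
- exact: (rrefl hr).
- exact: (rsym hr).
- exact: (rtrans hr).
- by rewrite !EvD; apply: (radd hr).
- by rewrite !EvM; apply: (rmul hr).
Qed.

Section Rho.
Variables (rho : B -> B -> Prop) (hr : congruence rho).

Lemma key (phi : Hom_quot iota rho T) (P : 'I_n -> B) :
  (forall i, qclass rho (P i) = sval phi (qclass cT (pvar A n i))) ->
  forall p, sval phi (qclass cT p) = qclass rho (Ev P p).
Proof.
case: phi => phi [h0 h1 hD hM hS] /= hP p.
pose psi p := qrepr (phi (qclass cT p)).
have cD p1 q1 : qclass cT (p1 + q1) = qadd (qclass cT p1) (qclass cT q1).
  by apply: (qclass_eq hT); apply: (radd hT); apply: (rsym hT); apply: (qrepr_rel hT).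
have cM p1 q1 : qclass cT (p1 * q1) = qmul (qclass cT p1) (qclass cT q1).
  by apply: (qclass_eq hT); apply: (rmul hT); apply: (rsym hT); apply: (qrepr_rel hT).
have mpsi : rmor rho psi.
  split=> [||p1 q1|p1 q1]; rewrite /psi.
  - have -> : qclass cT 0 = qzero cT by [].
    by rewrite h0; exact: (qrepr_rel hr).
  - have -> : qclass cT 1 = qone cT by [].
    by rewrite h1; exact: (qrepr_rel hr).
  - rewrite cD hD; exact: (qrepr_rel hr).
  - rewrite cM hM; exact: (qrepr_rel hr).
have E : rho (psi p) (Ev P p).
  apply: (rmor_uniq hr mpsi (Ev_rmor hr P)) => [a|i hi].
    rewrite Ev_cst /psi.
    have -> : qclass cT (polyn_cst n a) = qscale (@polyn_cst A n) a (qone cT).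
      apply: (qclass_eq hT); rewrite -[X in cT X _]mulr1.
      apply: (rmul hT); first exact: (rrefl hT).
      apply: (rsym hT); exact: (qrepr_rel hT).
    rewrite hS h1 /qscale; apply: (rtrans hr); first exact: (qrepr_rel hr).
    rewrite -[X in rho _ X]mulr1; apply: (rmul hr); first exact: (rrefl hr).
    exact: (qrepr_rel hr).
  have -> : i = Ordinal hi by [].
  rewrite Ev_var /psi -hP; exact: (qrepr_rel hr).
by rewrite -(qclass_eq hr E) /psi qreprK.
Qed.

Definition homZ P (h : Zrho iota rho T P) : Hom_quot iota rho T.
Proof.
exists (fun u => qclass rho (Ev P (qrepr u))).
have G := Ev_gen hr h.
have R x : rho (Ev P (qrepr (qclass cT x))) (Ev P x) by apply: G; exact: (qrepr_rel hT).
split=> [||u v|u v|a u]; apply: (qclass_eq hr).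
- by rewrite -(Ev0 P); apply: R.
- by rewrite -(Ev1 P); apply: R.
- apply: (rtrans hr); first exact: R.
  rewrite EvD; apply: (radd hr); apply: (rsym hr); exact: (qrepr_rel hr).
- apply: (rtrans hr); first exact: R.
  rewrite EvM; apply: (rmul hr); apply: (rsym hr); exact: (qrepr_rel hr).
- apply: (rtrans hr); first exact: R.
  rewrite EvM Ev_cst; apply: (rmul hr); first exact: (rrefl hr).
  apply: (rsym hr); exact: (qrepr_rel hr).
Defined.

Definition repP (v : Zrho_quot iota rho T) : 'I_n -> B :=
  proj1_sig (constructive_indefinite_description _ (proj2_sig v)).

Lemma repP_spec v : Zrho iota rho T (repP v) /\ sval v = fun i => qclass rho (repP v i).
Proof. rewrite /repP; case: (constructive_indefinite_description _ _) => P hP //. Qed.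

Definition Fq (v : Zrho_quot iota rho T) : Hom_quot iota rho T :=
  homZ (proj1 (repP_spec v)).

Lemma Gq_spec (phi : Hom_quot iota rho T) :
  exists P, Zrho iota rho T P /\
    (fun i : 'I_n => sval phi (qclass cT (pvar A n i))) = (fun i => qclass rho (P i)).
Proof.
pose P (i : 'I_n) := qrepr (sval phi (qclass cT (pvar A n i))).
have hP (i : 'I_n) : qclass rho (P i) = sval phi (qclass cT (pvar A n i)) by rewrite qreprK.
exists P; split; last by apply: functional_extensionality => i; rewrite hP.
move=> fg hfg; apply: (qclass_inj hr).
rewrite -!(key hP); congr (sval phi _).
apply: (qclass_eq hT).
exact: gen_cong_T.
Qed.

Definition Gq (phi : Hom_quot iota rho T) : Zrho_quot iota rho T :=
  exist _ _ (Gq_spec phi).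

Lemma bij_q : bijective Fq.
Proof.
exists Gq.
- move=> v; apply: sig_eqP => /=; apply: functional_extensionality => i.
  have [hZ hv] := repP_spec v.
  rewrite hv; apply: (qclass_eq hr).
  rewrite -(Ev_var (repP v) i); apply: (Ev_gen hr hZ); exact: (qrepr_rel hT).
- move=> phi; apply: sig_eqP => /=; apply: functional_extensionality => u.
  have [hZ hv] := repP_spec (Gq phi).
  have hP (i : 'I_n) : qclass rho (repP (Gq phi) i) = sval phi (qclass cT (pvar A n i)).
    by have := congr1 (fun f => f i) hv => /= ->.
  by rewrite -(key hP) qreprK.
Qed.
End Rho.

Lemma keyB (phi : Hom_B iota T) (P : 'I_n -> B) :
  (forall i, P i = sval phi (qclass cT (pvar A n i))) ->
  forall p, sval phi (qclass cT p) = Ev P p.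
Proof.
case: phi => phi [h0 h1 hD hM hS] /= hP p.
pose psi p := phi (qclass cT p).
have cD p1 q1 : qclass cT (p1 + q1) = qadd (qclass cT p1) (qclass cT q1).
  by apply: (qclass_eq hT); apply: (radd hT); apply: (rsym hT); apply: (qrepr_rel hT).
have cM p1 q1 : qclass cT (p1 * q1) = qmul (qclass cT p1) (qclass cT q1).
  by apply: (qclass_eq hT); apply: (rmul hT); apply: (rsym hT); apply: (qrepr_rel hT).
have mpsi : rmor eq psi.
  split=> [||p1 q1|p1 q1]; rewrite /psi.
  - exact: h0.
  - exact: h1.
  - by rewrite cD hD.
  - by rewrite cM hM.
apply: (rmor_uniq (@eq_cong B) mpsi (Ev_rmor (@eq_cong B) P)) => [a|i hi].
  rewrite Ev_cst /psi.
  have -> : qclass cT (polyn_cst n a) = qscale (@polyn_cst A n) a (qone cT).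
    apply: (qclass_eq hT); rewrite -[X in cT X _]mulr1.
    apply: (rmul hT); first exact: (rrefl hT).
    apply: (rsym hT); exact: (qrepr_rel hT).
  by rewrite hS h1 mulr1.
have -> : i = Ordinal hi by [].
by rewrite Ev_var /psi -hP.
Qed.

Definition homB P (h : Zrho iota (@eq B) T P) : Hom_B iota T.
Proof.
exists (fun u => Ev P (qrepr u)).
have G := Ev_gen (@eq_cong B) h.
have R x : Ev P (qrepr (qclass cT x)) = Ev P x by apply: G; exact: (qrepr_rel hT).
split=> [||u v|u v|a u].
- by rewrite -(Ev0 P); apply: R.
- by rewrite -(Ev1 P); apply: R.
- by rewrite /qadd R EvD.
- by rewrite /qmul R EvM.
- by rewrite /qscale R EvM Ev_cst.
Defined.

Definition FB (P : {P : 'I_n -> B | Zrho iota (@eq B) T P}) : Hom_B iota T :=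
  homB (proj2_sig P).

Lemma GB_spec (phi : Hom_B iota T) :
  Zrho iota (@eq B) T (fun i : 'I_n => sval phi (qclass cT (pvar A n i))).
Proof.
move=> fg hfg; rewrite -!(@keyB phi (fun i : 'I_n => sval phi (qclass cT (pvar A n i)))) //.
congr (sval phi _); apply: (qclass_eq hT).
exact: gen_cong_T.
Qed.

Definition GB (phi : Hom_B iota T) : {P : 'I_n -> B | Zrho iota (@eq B) T P} :=
  exist _ _ (GB_spec phi).

Lemma bij_B : bijective FB.
Proof.
exists GB.
- move=> [P hZ]; apply: sig_eqP => /=; apply: functional_extensionality => i.
  rewrite -(Ev_var P i); apply: (Ev_gen (@eq_cong B) hZ); exact: (qrepr_rel hT).
- move=> phi; apply: sig_eqP => /=; apply: functional_extensionality => u.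
  by rewrite -(@keyB phi) ?qreprK.
Qed.
End Main.

Theorem theorem3p12 (A B : comNzSemiRingType) (iota : {rmorphism A -> B})
  (iota_inj : injective iota) (n : nat)
  (rho : B -> B -> Prop) (rho_cong : congruence rho)
  (T : spoly A n * spoly A n -> Prop) (T_ne : exists t, T t) :
  (exists F : Zrho_quot iota rho T -> Hom_quot iota rho T, bijective F) /\
  (exists G : {P : 'I_n -> B | Zrho iota (@eq B) T P} -> Hom_B iota T,
     bijective G).
Proof.
split; [exists (Fq rho_cong); exact: bij_q | exists (@FB A B iota n T); exact: bij_B].
Qed.
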